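(* Let $\Sigma$ be an alphabet with $|\Sigma|\ge 3$. A function $f\colon\Sigma^*\to\Sigma^*$ is congruence preserving if and only if there exist $n\in\mathbb{N}$ and words $w_0,\ldots,w_n\in\Sigma^*$ such that $f(x)=w_0xw_1x\cdots w_{n-1}xw_n$ for all $x\in\Sigma^*$.
   Context: $\Sigma^*$ denotes the free monoid over $\Sigma$: finite words over $\Sigma$ with concatenation, unit the empty word $\varepsilon$. A congruence on $\Sigma^*$ is an equivalence relation $\sim$ such that $u\sim v$ and $u'\sim v'$ imply $uu'\sim vv'$. A function $f\colon(\Sigma^* )^k\to\Sigma^*$ is congruence preserving (CP) if for every congruence $\sim$ on $\Sigma^*$ and all $u_1,\ldots,u_k,v_1,\ldots,v_k\in\Sigma^*$ with $u_i\sim v_i$ for $i=1,\ldots,k$, we have $f(u_1,\ldots,u_k)\sim f(v_1,\ldots,v_k)$. *)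

(* Defs.v *)
From mathcomp Require Import all_boot.
Set Implicit Arguments. Unset Strict Implicit. Unset Printing Implicit Defensive.

Definition congruence (T : Type) (R : seq T -> seq T -> Prop) : Prop :=
  [/\ (forall u, R u u),
      (forall u v, R u v -> R v u),
      (forall u v w, R u v -> R v w -> R u w) &
      (forall u v u' v', R u v -> R u' v' -> R (u ++ u') (v ++ v'))].

Definition congruence_preserving (T : Type) (f : seq T -> seq T) : Prop :=
  forall R : seq T -> seq T -> Prop, congruence R ->
    forall u v, R u v -> R (f u) (f v).

Definition interleave (T : Type) (n : nat) (w : nat -> seq T) (x : seq T) : seq T :=
  w 0 ++ flatten [seq x ++ w i.+1 | i <- iota 0 n].

(* Main.v *)
Require Import Defs.
From mathcomp Require Import all_boot.
Set Implicit Arguments. Unset Strict Implicit. Unset Printing Implicit Defensive.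

Definition morph (T : Type) (phi : T -> seq T) (u : seq T) := flatten (map phi u).

Lemma morph_cons T (phi : T -> seq T) x u : morph phi (x :: u) = phi x ++ morph phi u.
Proof. by []. Qed.

Lemma morph_cat T (phi : T -> seq T) u v : morph phi (u ++ v) = morph phi u ++ morph phi v.
Proof. by rewrite /morph map_cat flatten_cat. Qed.

Lemma ker_congr T (phi : T -> seq T) : congruence (fun u v => morph phi u = morph phi v).
Proof.
split.
- by [].
- by move=> u v H; rewrite H.
- by move=> u v w H H'; rewrite H H'.
- by move=> u v u' v' H H'; rewrite !morph_cat H H'.
Qed.

Lemma cp_morph T (f : seq T -> seq T) (phi : T -> seq T) u v :
  congruence_preserving f -> morph phi u = morph phi v -> morph phi (f u) = morph phi (f v).
Proof. move=> H; exact: (H _ (ker_congr phi)). Qed.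

Lemma catI T (p u v : seq T) : p ++ u = p ++ v -> u = v.
Proof. by elim: p => //= x p IH [] /IH. Qed.

Definition subst (T : Type) (t : seq (option T)) (x : seq T) : seq T :=
  flatten (map (fun o => if o is Some c then [:: c] else x) t).

Lemma subst_cons T o (t : seq (option T)) x :
  subst (o :: t) x = (if o is Some c then [:: c] else x) ++ subst t x.
Proof. by []. Qed.

Lemma subst_cp T (t : seq (option T)) : congruence_preserving (subst t).
Proof.
move=> R [Rr Rs Rt Rc] u v Huv; elim: t => [|o t IH]; first exact: Rr.
rewrite !subst_cons; case: o => [c|]; exact: Rc.
Qed.

Lemma subst_cat T (t1 t2 : seq (option T)) x : subst (t1 ++ t2) x = subst t1 x ++ subst t2 x.
Proof. by rewrite /subst map_cat flatten_cat. Qed.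

Lemma subst_some T (s : seq T) x : subst (map Some s) x = s.
Proof. by elim: s => //= c s IH; rewrite subst_cons IH. Qed.

Lemma subst_flatten T (ts : seq (seq (option T))) x :
  subst (flatten ts) x = flatten (map (fun t => subst t x) ts).
Proof. by elim: ts => //= t ts IH; rewrite subst_cat IH. Qed.

Lemma interleave_subst T n (w : nat -> seq T) :
  exists t, forall x, interleave n w x = subst t x.
Proof.
exists (map Some (w 0) ++ flatten [seq None :: map Some (w i.+1) | i <- iota 0 n]) => x.
rewrite subst_cat subst_some subst_flatten /interleave -map_comp; congr (_ ++ flatten _).
by apply: eq_map => i /=; rewrite subst_cons subst_some.
Qed.

Lemma subst_interleave T (t : seq (option T)) :
  exists n w, forall x, subst t x = interleave n w x.
Proof.
elim: t => [|o t [n [w IH]]].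
  by exists 0, (fun _ => [::]).
case: o => [c|].
  exists n, (fun i => if i is 0 then c :: w 0 else w i) => x.
  by rewrite subst_cons IH /interleave.
exists n.+1, (fun i => if i is j.+1 then w j else [::]) => x.
have E : iota 1 n = map (addn 1) (iota 0 n) by rewrite -iotaDl.
rewrite subst_cons IH /interleave /= E -map_comp catA; congr (_ ++ flatten _).
Qed.

Lemma sep (T : eqType) (u v : seq T) :
  (forall t : T, exists s, s != t) ->
  (forall s t : T, s != t -> exists phi : T -> seq T, morph phi u = morph phi v /\
      exists x y xs ys, [/\ phi s = x :: xs, phi t = y :: ys & x != y]) ->
  u = v.
Proof.
move=> Hne; elim: u v => [|s u IH] [|t v] H //.
- have [s Hs] := Hne t.
  have [phi [E [x [y [xs [ys [_ Ht _]]]]]]] := H _ _ Hs.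
  by move: E; rewrite morph_cons Ht.
- have [s' Hs] := Hne s.
  have [phi [E [x [y [xs [ys [_ Ht _]]]]]]] := H _ _ Hs.
  by move: E; rewrite morph_cons Ht.
- case: (eqVneq s t) => [Est|Hst]; first subst t.
  + congr (_ :: _); apply: IH => s' t' Hst'.
    have [phi [E R]] := H _ _ Hst'.
    exists phi; split => //; move: E; rewrite !morph_cons; exact: catI.
  + have [phi [E [x [y [xs [ys [Hs Ht Hxy]]]]]]] := H _ _ Hst.
    move: E; rewrite !morph_cons Hs Ht /= => -[] Exy.
    by rewrite Exy eqxx in Hxy.
Qed.

Lemma mrg (T : eqType) (x x' y z : T) : y != z ->
  (if x == y then z else x) = (if x' == y then z else x') ->
  [\/ x = x', x = y /\ x' = z | x = z /\ x' = y].
Proof.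
move=> yz; case: (eqVneq x y) => [->|xy]; case: (eqVneq x' y) => [->|x'y] //= E.
- by constructor 1.
- by constructor 2.
- by constructor 3.
- by constructor 1.
Qed.

Lemma pointwise (T : eqType) (a b c pa pb pc : T) : a != b -> a != c -> b != c ->
  (if pa == a then b else pa) = (if pb == a then b else pb) ->
  (if pa == a then c else pa) = (if pc == a then c else pc) ->
  (if pb == b then c else pb) = (if pc == b then c else pc) ->
  [/\ pa = (if pa == pb then pa else a), pb = (if pa == pb then pa else b)
    & pc = (if pa == pb then pa else c)].
Proof.
move=> ab ac bc H1 H2 H3.
case/(mrg ab): H1 => [E1|[E1 E1']|[E1 E1']];
case/(mrg ac): H2 => [E2|[E2 E2']|[E2 E2']];
case/(mrg bc): H3 => [E3|[E3 E3']|[E3 E3']]; subst;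
  rewrite ?eqxx ?(negbTE ab) ?(negbTE ac) ?(negbTE bc) //;
  by rewrite ?eqxx in ab ac bc.
Qed.

Lemma third (T : finType) (s t : T) : 3 <= #|T| -> exists c : T, (c != s) && (c != t).
Proof.
move=> H; have [/existsP //|] := boolP [exists c : T, (c != s) && (c != t)].
rewrite negb_exists => /forallP Hc.
have : #|T| <= #|[:: s; t]|.
  apply: subset_leq_card; apply/subsetP => x _.
  have := Hc x; rewrite negb_and !negbK !inE => /orP[] ->; by rewrite ?orbT.
have := card_size [:: s; t] => /= H1 H2.
by have := leq_trans H (leq_trans H2 H1).
Qed.

Lemma morph_single (T : Type) (g : T -> T) u : morph (fun w => [:: g w]) u = map g u.
Proof. by elim: u => //= x u IH; rewrite morph_cons IH. Qed.

Lemma morph_id_on (T : eqType) (phi : T -> seq T) u :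
  (forall w, w \in u -> phi w = [:: w]) -> morph phi u = u.
Proof.
elim: u => //= x u IH H; rewrite morph_cons H ?mem_head // IH // => w Hw.
by apply: H; rewrite in_cons Hw orbT.
Qed.

Lemma morph_erase (T : eqType) (d : T) u :
  morph (fun w => if w == d then [::] else [:: w]) u = filter (fun w => w != d) u.
Proof. by elim: u => //= x u IH; rewrite morph_cons IH; case: (x == d). Qed.

Lemma subst_letter (T : Type) (t : seq (option T)) x :
  subst t [:: x] = map (fun o => if o is Some c then c else x) t.
Proof. by elim: t => //= o t IH; rewrite subst_cons IH; case: o. Qed.

Lemma letters (T : finType) (hS : 3 <= #|T|) (f : seq T -> seq T)
  (Hf : congruence_preserving f) (a b : T) (ab : a != b) :
  forall x, f [:: x] = map (fun p => if p.1 == p.2 then p.1 else x) (zip (f [:: a]) (f [:: b])).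
Proof.
have merge : forall y z, map (fun w => if w == y then z else w) (f [:: y])
                        = map (fun w => if w == y then z else w) (f [:: z]).
  move=> y z; have := cp_morph (phi := fun w => [:: if w == y then z else w]) (u := [:: y]) (v := [:: z]) Hf.
  rewrite !morph_single /= eqxx if_same; by apply.
have sz : forall y, size (f [:: y]) = size (f [:: a]).
  by move=> y; rewrite -(size_map (fun w => if w == y then a else w)) merge size_map.
move=> x; apply: (eq_from_nth (x0 := x)).
  by rewrite size_map size_zip !sz minnn.
move=> i Hi; rewrite sz in Hi.
rewrite (nth_map (x, x)) ?size_zip ?sz ?minnn // nth_zip ?sz //=.
have nm : forall y z, (if nth x (f [:: y]) i == y then z else nth x (f [:: y]) i)
                    = (if nth x (f [:: z]) i == y then z else nth x (f [:: z]) i).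
  move=> y z; have := congr1 (fun s => nth z s i) (merge y z).
  by rewrite !(nth_map x) ?sz.
have key : forall c, a != c -> b != c ->
   [/\ nth x (f [:: a]) i = (if nth x (f [:: a]) i == nth x (f [:: b]) i then nth x (f [:: a]) i else a),
       nth x (f [:: b]) i = (if nth x (f [:: a]) i == nth x (f [:: b]) i then nth x (f [:: a]) i else b)
     & nth x (f [:: c]) i = (if nth x (f [:: a]) i == nth x (f [:: b]) i then nth x (f [:: a]) i else c)].
  move=> c ac bc; apply: pointwise => //; by rewrite nm.
have [c /andP[ca cb]] := third a b hS.
have ac : a != c by rewrite eq_sym.
have bc : b != c by rewrite eq_sym.
case: (eqVneq x a) => [Exa|xa].
  by subst x; have [<- _ _] := key c ac bc.
case: (eqVneq x b) => [Exb|xb].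
  by subst x; have [_ <- _] := key c ac bc.
have ax : a != x by rewrite eq_sym.
have bx : b != x by rewrite eq_sym.
by have [_ _ <-] := key x ax bx.
Qed.

Lemma interleave_cp (T : Type) n (w : nat -> seq T) : congruence_preserving (interleave n w).
Proof.
have [t Ht] := interleave_subst n w.
move=> R HR u v Huv; rewrite !Ht; exact: subst_cp.
Qed.

Theorem mainTheorem2 (Sigma : finType) (hS : 3 <= #|Sigma|)
  (f : seq Sigma -> seq Sigma) :
  congruence_preserving f <->
  exists (n : nat) (w : nat -> seq Sigma), forall x, f x = interleave n w x.
Proof.
split; last first.
  move=> [n [w Hw]] R HR u v Huv; rewrite !Hw; exact: interleave_cp.
move=> Hf.
have [a0 _] : exists a0 : Sigma, a0 \in Sigma.
  by apply/card_gt0P; apply: leq_trans hS.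
have [b0 /andP[ba _]] := third a0 a0 hS.
have ab : a0 != b0 by rewrite eq_sym.
pose t := map (fun p : Sigma * Sigma => if p.1 == p.2 then Some p.1 else None)
              (zip (f [:: a0]) (f [:: b0])).
suff Hx : forall x, f x = subst t x.
  have [n [w Hw]] := subst_interleave t; exists n, w => x; by rewrite Hx Hw.
have Hne : forall t' : Sigma, exists s, s != t'.
  by move=> t'; have [s /andP[s1 _]] := third t' t' hS; exists s.
have Hl : forall x, f [:: x] = subst t [:: x].
  move=> x; rewrite (letters hS Hf ab) subst_letter /t -map_comp.
  by apply: eq_map => p /=; case: (p.1 == p.2).
have Ht := subst_cp t.
have H0 : f [::] = subst t [::].
  apply: sep => // s t' st.
  have [c /andP[cs ct]] := third s t' hS.
  exists (fun w => if w == c then [::] else [:: w]); split.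
    have E : morph (fun w => if w == c then [::] else [:: w]) [::]
           = morph (fun w => if w == c then [::] else [:: w]) [:: c] by rewrite /morph /= eqxx.
    by rewrite (cp_morph Hf E) Hl (cp_morph Ht E).
  exists s, t', [::], [::]; split => //.
  - by rewrite eq_sym (negbTE cs).
  - by rewrite eq_sym (negbTE ct).
move=> x; have [k] := ubnP (size x); elim: k x => // k IHk x Hk.
case: x Hk => [|d [|d' x']] Hk; first exact: H0; first exact: Hl.
set x := d :: d' :: x' in Hk *; rewrite ltnS in Hk.
apply: sep => // s t' st.
case: (boolP (has (fun e => (e != s) && (e != t')) x)) => [/hasP [e ex /andP[es et]]|].
  pose phi := fun w => if w == e then [::] else [:: w].
  pose y := filter (fun w => w != e) x.
  have E : morph phi x = morph phi y.
    by rewrite /phi !morph_erase /y filter_id.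
  have Hy : size y < k.
    apply: (leq_trans _ Hk); rewrite /y size_filter.
    rewrite -(count_predC (fun w => w != e) x) -addn1 leq_add2l -has_count.
    by apply/hasP; exists e => //=; rewrite negbK.
  exists phi; split.
    by rewrite (cp_morph Hf E) (IHk _ Hy) (cp_morph Ht E).
  exists s, t', [::], [::]; split => //.
  - by rewrite /phi eq_sym (negbTE es).
  - by rewrite /phi eq_sym (negbTE et).
move/hasPn => Hall.
have [c /andP[cs ct]] := third s t' hS.
pose phi := fun w => if w == c then x else [:: w].
have E : morph phi x = morph phi [:: c].
  rewrite morph_id_on; first by rewrite /morph /phi /= eqxx cats0.
  move=> w wx; rewrite /phi; case: (eqVneq w c) => // Ewc.
  by move: (Hall w wx); rewrite Ewc cs ct.
exists phi; split.
  have H1 : size [:: c] < k by apply: (leq_trans _ Hk).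
  by rewrite (cp_morph Hf E) (IHk _ H1) (cp_morph Ht E).
exists s, t', [::], [::]; split => //.
- by rewrite /phi eq_sym (negbTE cs).
- by rewrite /phi eq_sym (negbTE ct).
Qed.
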